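(* Let $\Gamma$ be a simple, undirected, connected graph with $p\ge 2$ vertices, minimum degree $\delta(\Gamma)\ge 2$, maximum degree $\Delta(\Gamma)$ and girth at least $5$. Then $\gamma_{[3R]}(\Gamma)\le 2p-2\Delta(\Gamma)+1$.
   Context: The girth of a graph is the minimum length of a cycle in it. For a graph $\Gamma=(V,E)$ and $h:V\to\{0,1,2,3,4\}$, let $AN(v)=\{w\in N(v):h(w)\ge 1\}$, $AN[v]=AN(v)\cup\{v\}$ and $h(S)=\sum_{u\in S}h(u)$. $h$ is a triple Roman dominating function (3RDF) if every $v$ with $h(v)<3$ satisfies $h(AN[v])\ge|AN(v)|+3$. The triple Roman domination number $\gamma_{[3R]}(\Gamma)$ is the minimum weight $h(V)$ of a 3RDF of $\Gamma$. *)

(* Defs.v *)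
From mathcomp Require Import all_boot all_order.
Set Implicit Arguments. Unset Strict Implicit. Unset Printing Implicit Defensive.

Definition simple_graph (T : finType) (g : rel T) : Prop :=
  symmetric g /\ irreflexive g.

Definition connected_graph (T : finType) (g : rel T) : Prop :=
  forall x y : T, connect g x y.

Definition nbhd (T : finType) (g : rel T) (v : T) : {set T} := [set w | g v w].
Definition deg (T : finType) (g : rel T) (v : T) : nat := #|nbhd g v|.
Definition max_deg (T : finType) (g : rel T) : nat := \max_(v : T) deg g v.
Definition min_deg_ge (T : finType) (g : rel T) (k : nat) : Prop :=
  forall v : T, k <= deg g v.

(* girth >= k: every cycle (sequence of >= 3 distinct vertices, consecutive ones
   adjacent, last adjacent to first) has length >= k. Acyclic graphs have
   infinite girth and satisfy this vacuously. *)
Definition girth_ge (T : finType) (g : rel T) (k : nat) : Prop :=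
  forall s : seq T, uniq s -> 3 <= size s -> cycle g s -> k <= size s.

Definition active_nbhd (T : finType) (g : rel T) (h : {ffun T -> 'I_5}) (v : T) : {set T} :=
  [set w | g v w & 1 <= h w].

Definition weight (T : finType) (h : {ffun T -> 'I_5}) (S : {set T}) : nat :=
  \sum_(u in S) (h u : nat).

Definition is3RDF (T : finType) (g : rel T) (h : {ffun T -> 'I_5}) : bool :=
  [forall v : T, (h v < 3) ==>
     (#|active_nbhd g h v| + 3 <= weight h (v |: active_nbhd g h v))].

Definition all4 (T : finType) : {ffun T -> 'I_5} := [ffun _ => (inord 4 : 'I_5)].

(* gamma_[3R] = minimum of h(V) over all 3RDFs h (the constant-4 function is a
   3RDF, so its weight 4|V| is a valid starting value for the minimum). *)
Definition gamma3R (T : finType) (g : rel T) : nat :=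
  \big[minn/weight (all4 T) [set: T]]_(h : {ffun T -> 'I_5} | is3RDF g h)
     weight h [set: T].

(* Main.v *)
Require Import Defs.
From mathcomp Require Import all_boot all_order.
From mathcomp Require Import zify.

Lemma bigmin_le (I : eqType) (s : seq I) (P : pred I) (F : I -> nat) x0 i :
  i \in s -> P i -> \big[minn/x0]_(j <- s | P j) F j <= F i.
Proof.
elim: s => [|a s IH] //=; rewrite inE big_cons => /orP [/eqP <-|Hi] Pi.
  by rewrite Pi geq_minl.
case: (P a); last exact: IH.
by rewrite (leq_trans (geq_minr _ _)) // IH.
Qed.

Lemma sum_split (T : finType) (A : {set T}) (f : T -> nat) :
  (forall z, z \in A -> 1 <= f z) ->
  \sum_(z in A) f z = #|A| + \sum_(z in A) (f z - 1).
Proof.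
move=> H; rewrite -sum1_card -big_split /=.
by apply: eq_bigr => z /H; lia.
Qed.

Lemma sum_ge1 (T : finType) (A : {set T}) (f : T -> nat) x :
  (forall z, z \in A -> 1 <= f z) -> x \in A ->
  #|A| + (f x - 1) <= \sum_(z in A) f z.
Proof.
move=> H xA; rewrite sum_split // leq_add2l (bigD1 x) //=.
exact: leq_addr.
Qed.

Lemma sum_ge2 (T : finType) (A : {set T}) (f : T -> nat) x y :
  (forall z, z \in A -> 1 <= f z) -> x \in A -> y \in A -> x != y ->
  #|A| + (f x - 1) + (f y - 1) <= \sum_(z in A) f z.
Proof.
move=> H xA yA xy; rewrite sum_split // -addnA leq_add2l (bigD1 x) //=.
rewrite (bigD1 y) /=; last by rewrite yA eq_sym.
by rewrite addnA leq_addr.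
Qed.

Theorem proposition9 (T : finType) (g : rel T) :
  simple_graph g -> connected_graph g -> 2 <= #|T| ->
  min_deg_ge g 2 -> girth_ge g 5 ->
  gamma3R g <= 2 * #|T| - 2 * max_deg g + 1.
Proof.
move=> [gsym girr] _ cT mdeg gir.
have [v Hv] := eq_bigmax (deg g) (ltnW cT).
rewrite /max_deg Hv.
pose hv x : nat := if x == v then 3 else if g v x then 0 else 2.
pose h : {ffun T -> 'I_5} := [ffun x => inord (hv x)].
have hE x : (h x : nat) = hv x.
  by rewrite ffunE inordK // /hv; case: (x == v); case: (g v x).
have two_nb x : exists a b, [/\ g x a, g x b & a != b].
  have := mdeg x; rewrite /deg => /card_gt1P [a [b [Ha Hb ab]]].
  by exists a, b; rewrite !inE in Ha Hb.
have gne x y : g x y -> x != y.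
  by apply: contraTneq => ->; rewrite girr.
have notri a b : g v a -> g a b -> ~~ g v b.
  move=> va ab; apply/negP => vb.
  have := gir [:: v; a; b]; rewrite /= va ab (gsym b v) vb /=.
  rewrite !inE negb_or (gne _ _ va) (gne _ _ vb) (gne _ _ ab).
  by move=> /(_ isT isT isT).
have h3 : is3RDF g h.
  apply/forallP => x; apply/implyP; rewrite hE /hv.
  rewrite /weight big_setU1 /=; last by rewrite !inE girr.
  have pos z : z \in active_nbhd g h x -> 1 <= h z by rewrite !inE => /andP [].
  case: eqP => [->|/eqP xv] //.
  case: ifP => vx _.
  -
    idtac.
    have [a [b [xa xb ab]]] := two_nb x.
    have [w [xw wv]] : exists w, g x w /\ w != v.
      case: (eqVneq a v) => [av|av]; last by exists a.
      by exists b; split => //; rewrite -av eq_sym.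
    have vw : ~~ g v w by apply: notri vx xw.
    have vA : v \in active_nbhd g h x by rewrite !inE gsym vx hE /hv eqxx.
    have wA : w \in active_nbhd g h x by rewrite !inE xw hE /hv (negbTE wv) (negbTE vw).
    have := @sum_ge2 _ _ _ v w pos vA wA; rewrite !hE /hv eqxx (negbTE wv) (negbTE vw) eq_sym wv => /(_ isT).
    by rewrite (negbTE xv) vx; lia.
  - rewrite hE /hv (negbTE xv) vx.
    have [a [b [xa xb ab]]] := two_nb x.
    have [w [xw vw]] : exists w, g x w /\ ~~ g v w.
      case vb: (g v b); last by exists b; rewrite vb.
      case va: (g v a); last by exists a; rewrite va.
      have := gir [:: v; a; x; b]; rewrite /= va xb (gsym a x) xa gsym vb /=.
      rewrite !inE !negb_or (gne _ _ va) (gne _ _ vb) ab.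
      rewrite (gne _ _ xb) (eq_sym a x) (gne _ _ xa).
      have vx2 : v != x by rewrite eq_sym.
      by rewrite vx2 => /(_ isT isT isT).
    have wv : w != v by apply/negP => /eqP wv; rewrite wv gsym vx in xw.
    have wA : w \in active_nbhd g h x by rewrite !inE xw hE /hv (negbTE wv) (negbTE vw).
    have := @sum_ge1 _ _ _ w pos wA; rewrite hE /hv (negbTE wv) (negbTE vw).
    lia.
apply: (@leq_trans (weight h [set: T])).
  by apply: bigmin_le => //; rewrite mem_index_enum.
pose W := ~: (v |: nbhd g v).
have -> : weight h [set: T] = 3 + 2 * #|W|.
  rewrite /weight (eq_bigr (fun u => (if u == v then 3 else 0) + (if u \in W then 2 else 0))); last first.
    move=> u _; rewrite hE /hv !inE; case: eqP => [->|_]; first by rewrite girr.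
    by case: (g v u).
  rewrite big_split /= -!big_mkcondr /=.
  rewrite (eq_bigl (fun u => u == v)); last by move=> u; rewrite in_setT.
  have E1 : \sum_(i | i == v) 3 = 3 by apply: big_pred1_eq.
  have E2 : \sum_(i in [set: T] | i \in W) 2 = \sum_(i in W) 2.
    by apply: eq_bigl => u; rewrite in_setT.
  rewrite E1 E2 sum_nat_const mulnC.
  done.
have : #|W| + (1 + deg g v) = #|T|.
  have vn : v \notin nbhd g v by rewrite inE girr.
  by rewrite /W -(cardsC (v |: nbhd g v)) cardsU1 vn /deg addnC.
move: (deg g v) (#|W|) (#|T|) => d w t E.
rewrite -E; lia.
Qed.
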